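(* Let $X$ be a complex Banach space and $\Gamma\subset\mathcal{B}(X)$ such that $TS\in\Gamma$ for all $T,S\in\Gamma$. Let $\lambda:\Gamma\to\mathbb{T}$, $T\mapsto\lambda_T$, satisfy $\lambda_{TS}=\lambda_T\lambda_S$ for all $T,S\in\Gamma$, where $\mathbb{T}=\{\alpha\in\mathbb{C}:|\alpha|=1\}$. Let $\Gamma_1=\{\lambda_TT: T\in\Gamma\}$. Then $\operatorname{Rec}(\Gamma)=\operatorname{Rec}(\Gamma_1)$.
   Context: $\mathcal{B}(X)$ denotes the algebra of bounded linear operators on $X$. For $\Gamma\subset\mathcal{B}(X)$, a vector $x\in X\setminus\{0\}$ is called recurrent for $\Gamma$ if there exists a sequence $(T_k)_{k\geq 1}$ of elements of $\Gamma$ such that $T_kx\to x$ as $k\to\infty$. $\operatorname{Rec}(\Gamma)$ denotes the set of all recurrent vectors for $\Gamma$. *)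

(* Defs.v *)
From Stdlib Require Import Reals.
Open Scope R_scope.

Definition Cplx : Type := (R * R)%type.
Definition C0 : Cplx := (0, 0).
Definition C1 : Cplx := (1, 0).
Definition Cadd (a b : Cplx) : Cplx := (fst a + fst b, snd a + snd b).
Definition Cmul (a b : Cplx) : Cplx :=
  (fst a * fst b - snd a * snd b, fst a * snd b + snd a * fst b).
Definition Cmod (a : Cplx) : R := sqrt (fst a * fst a + snd a * snd a).

Record CBanach : Type := {
  vec :> Type;
  vzero : vec;
  vadd : vec -> vec -> vec;
  vopp : vec -> vec;
  vscal : Cplx -> vec -> vec;
  vnorm : vec -> R;
  vadd_assoc : forall x y z, vadd x (vadd y z) = vadd (vadd x y) z;
  vadd_comm : forall x y, vadd x y = vadd y x;
  vadd_zero : forall x, vadd x vzero = x;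
  vadd_opp : forall x, vadd x (vopp x) = vzero;
  vscal_one : forall x, vscal C1 x = x;
  vscal_mul : forall a b x, vscal a (vscal b x) = vscal (Cmul a b) x;
  vscal_addv : forall a x y, vscal a (vadd x y) = vadd (vscal a x) (vscal a y);
  vscal_adds : forall a b x, vscal (Cadd a b) x = vadd (vscal a x) (vscal b x);
  vnorm_eq0 : forall x, vnorm x = 0 -> x = vzero;
  vnorm_scal : forall a x, vnorm (vscal a x) = Cmod a * vnorm x;
  vnorm_triangle : forall x y, vnorm (vadd x y) <= vnorm x + vnorm y;
  vcomplete : forall u : nat -> vec,
    (forall eps, 0 < eps -> exists N, forall m n, (N <= m)%nat -> (N <= n)%nat ->
        vnorm (vadd (u m) (vopp (u n))) < eps) ->
    exists l, forall eps, 0 < eps -> exists N, forall n, (N <= n)%nat ->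
        vnorm (vadd (u n) (vopp l)) < eps
}.

Arguments vzero {_}.
Arguments vadd {_} _ _.
Arguments vopp {_} _.
Arguments vscal {_} _ _.
Arguments vnorm {_} _.

Definition converges_to {X : CBanach} (u : nat -> X) (l : X) : Prop :=
  forall eps, 0 < eps -> exists N, forall n, (N <= n)%nat ->
    vnorm (vadd (u n) (vopp l)) < eps.

Definition bounded_linear {X : CBanach} (T : X -> X) : Prop :=
  (forall x y, T (vadd x y) = vadd (T x) (T y)) /\
  (forall a x, T (vscal a x) = vscal a (T x)) /\
  (exists M, forall x, vnorm (T x) <= M * vnorm x).

Definition Rec {X : CBanach} (Gamma : (X -> X) -> Prop) (x : X) : Prop :=
  x <> vzero /\
  exists Tk : nat -> (X -> X), (forall k, Gamma (Tk k)) /\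
    converges_to (fun k => Tk k x) x.

(* Main.v *)
Require Import Defs.
From Stdlib Require Import Reals.
From Stdlib Require Import Lra Lia Psatz ClassicalEpsilon.
From mathcomp Require all_boot all_order all_algebra all_classical all_reals all_analysis Rstruct Rstruct_topology.
Open Scope R_scope.


Module MC.
Import all_boot all_order all_algebra all_classical all_reals all_analysis Rstruct Rstruct_topology.
Import Order.TTheory GRing.Theory Num.Theory.
Import numFieldNormedType.Exports.
Local Open Scope classical_set_scope.
Local Open Scope ring_scope.

Lemma BW (u : nat -> R) : (forall n, Rle (Rabs (u n)) 1) ->
  exists f : nat -> nat, (forall n, (f n < f (S n))%coq_nat) /\ exists l : R,
   forall eps : R, Rlt 0 eps -> exists N, forall n, (N <= n)%coq_nat -> Rlt (Rabs (u (f n) - l)) eps.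
Proof.
move=> hu.
case: (@bolzano_weierstrass R u).
  exists 1; split; first exact: num_real.
  move=> M M1 x _ /=. apply: le_trans (ltW M1). exact/RleP.
move=> f fi cf.
exists f; split.
  move=> n; apply/ssrnat.ltP; have := fi n.+1 n; rewrite ltnn => H; rewrite ltnNge; apply/negP => H2.
  have H3 : (f n.+1 <= f n)%O = true := H2. by rewrite H in H3.
exists (lim ((u \o f) @ \oo)) => eps /RltP e0.
have := cf; move/cvgrPdist_lt => /(_ eps e0) [N _ HN].
exists N => n /ssrnat.leP nN; apply/RltP. have := HN n nN. rewrite distrC. exact.
Qed.
End MC.



Definition Csub (a b : Cplx) : Cplx := (fst a - fst b, snd a - snd b).
Definition Cconj (a : Cplx) : Cplx := (fst a, - snd a).
Definition N1 (a : Cplx) : R := Rabs (fst a) + Rabs (snd a).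
Definition cunit (a : Cplx) : Prop := fst a * fst a + snd a * snd a = 1.
Fixpoint Cpow (a : Cplx) (n : nat) : Cplx :=
  match n with O => Defs.C1 | S k => Cmul a (Cpow a k) end.

Lemma Ceq (a b : Cplx) : fst a = fst b -> snd a = snd b -> a = b.
Proof. destruct a, b; simpl; intros; subst; reflexivity. Qed.

Lemma Cmul_comm a b : Cmul a b = Cmul b a.
Proof. destruct a, b; apply Ceq; simpl; ring. Qed.
Lemma Cmul_assoc a b c : Cmul a (Cmul b c) = Cmul (Cmul a b) c.
Proof. destruct a, b, c; apply Ceq; simpl; ring. Qed.
Lemma Cmul_1l a : Cmul Defs.C1 a = a.
Proof. destruct a; apply Ceq; simpl; ring. Qed.

Lemma unit_mul a b : cunit a -> cunit b -> cunit (Cmul a b).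
Proof.
  destruct a as [p q], b as [r s]; unfold cunit; simpl; intros Ha Hb.
  replace ((p * r - q * s) * (p * r - q * s) + (p * s + q * r) * (p * s + q * r))
    with ((p*p+q*q)*(r*r+s*s)) by ring. rewrite Ha, Hb; ring.
Qed.
Lemma unit_C1 : cunit Defs.C1. Proof. unfold cunit; simpl; ring. Qed.
Lemma unit_pow a n : cunit a -> cunit (Cpow a n).
Proof. intros H; induction n; simpl. apply unit_C1. apply unit_mul; auto. Qed.
Lemma unit_Cmod a : Cmod a = 1 -> cunit a.
Proof.
  unfold Cmod, cunit; intros H.
  assert (H0 : 0 <= fst a * fst a + snd a * snd a) by nra.
  rewrite <- (sqrt_sqrt _ H0), H; ring.
Qed.
Lemma Cmod_unit a : cunit a -> Cmod a = 1.
Proof. unfold Cmod, cunit; intros H; rewrite H; apply sqrt_1. Qed.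
Lemma unit_bound a : cunit a -> Rabs (fst a) <= 1 /\ Rabs (snd a) <= 1.
Proof.
  destruct a as [p q]; unfold cunit; simpl; intros H; split;
  apply Rabs_le; split; nra.
Qed.
Lemma N1_unit a : cunit a -> N1 a <= 2.
Proof. intros H; destruct (unit_bound a H); unfold N1; lra. Qed.
Lemma N1_ge0 a : 0 <= N1 a.
Proof. unfold N1; pose proof (Rabs_pos (fst a)); pose proof (Rabs_pos (snd a)); lra. Qed.
Lemma N1_mul a b : N1 (Cmul a b) <= N1 a * N1 b.
Proof.
  destruct a as [p q], b as [r s]; unfold N1; simpl.
  pose proof (Rabs_triang (p*r) (- (q*s))). pose proof (Rabs_triang (p*s) (q*r)).
  unfold Rminus. rewrite Rabs_Ropp in H. rewrite !Rabs_mult in *.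
  pose proof (Rabs_pos p); pose proof (Rabs_pos q); pose proof (Rabs_pos r); pose proof (Rabs_pos s).
  nra.
Qed.
Lemma N1_tri a b c : N1 (Csub a c) <= N1 (Csub a b) + N1 (Csub b c).
Proof.
  unfold N1, Csub; simpl.
  pose proof (Rabs_triang (fst a - fst b) (fst b - fst c)).
  pose proof (Rabs_triang (snd a - snd b) (snd b - snd c)).
  replace (fst a - fst b + (fst b - fst c)) with (fst a - fst c) in H by ring.
  replace (snd a - snd b + (snd b - snd c)) with (snd a - snd c) in H0 by ring.
  lra.
Qed.
Lemma N1_sym a b : N1 (Csub a b) = N1 (Csub b a).
Proof.
  unfold N1, Csub; simpl. rewrite (Rabs_minus_sym (fst a)), (Rabs_minus_sym (snd a)). ring.
Qed.
Lemma Cmod_N1 a : Cmod a <= N1 a.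
Proof.
  unfold Cmod, N1. destruct a as [p q]; simpl.
  pose proof (Rabs_pos p); pose proof (Rabs_pos q).
  rewrite <- (sqrt_Rsqr (Rabs p + Rabs q)) by lra.
  apply sqrt_le_1_alt. unfold Rsqr.
  assert (E1 : p * p = Rabs p * Rabs p) by (rewrite <- Rabs_mult; symmetry; apply Rabs_pos_eq; nra).
  assert (E2 : q * q = Rabs q * Rabs q) by (rewrite <- Rabs_mult; symmetry; apply Rabs_pos_eq; nra).
  rewrite E1, E2. nra.
Qed.
Lemma Cmod_ge0 a : 0 <= Cmod a.
Proof. apply sqrt_pos. Qed.

Lemma Csub_mul a b m n :
  Csub (Cmul a b) (Cmul m n) = Cadd (Cmul a (Csub b n)) (Cmul (Csub a m) n).
Proof. destruct a, b, m, n; apply Ceq; simpl; ring. Qed.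
Lemma N1_add a b : N1 (Cadd a b) <= N1 a + N1 b.
Proof.
  unfold N1, Cadd; simpl. pose proof (Rabs_triang (fst a) (fst b)).
  pose proof (Rabs_triang (snd a) (snd b)). lra.
Qed.
Lemma Cpow_add a n k : Cpow a (n + k) = Cmul (Cpow a n) (Cpow a k).
Proof.
  induction n; simpl. rewrite Cmul_1l; auto.
  rewrite IHn, Cmul_assoc; auto.
Qed.
Lemma conj_trick u w : cunit u ->
  Csub w Defs.C1 = Cmul (Cconj u) (Csub (Cmul u w) u).
Proof.
  destruct u as [p q], w as [r s]; unfold cunit; simpl; intros H; apply Ceq; simpl.
  - replace (p * (p * r - q * s - p) - - q * (p * s + q * r - q)) with ((p*p+q*q)*r - (p*p+q*q)) by ring.
    rewrite H; ring.
  - replace (p * (p * s + q * r - q) + - q * (p * r - q * s - p)) with ((p*p+q*q)*s) by ring.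
    rewrite H; ring.
Qed.
Lemma N1_conj u : N1 (Cconj u) = N1 u.
Proof. unfold N1, Cconj; simpl; rewrite Rabs_Ropp; ring. Qed.


Definition conv (v : nat -> R) (l : R) : Prop :=
  forall eps, 0 < eps -> exists N, forall n, (N <= n)%nat -> Rabs (v n - l) < eps.
Definition incr (g : nat -> nat) : Prop := forall n, (g n < g (S n))%nat.

Lemma incr_ge g : incr g -> forall n, (n <= g n)%nat.
Proof. intros H n; induction n. lia. specialize (H n); lia. Qed.
Lemma incr_mono g : incr g -> forall n m, (n <= m)%nat -> (g n <= g m)%nat.
Proof. intros H n m Hnm; induction Hnm. lia. specialize (H m); lia. Qed.
Lemma incr_comp f g : incr f -> incr g -> incr (fun n => f (g n)).
Proof.
  intros Hf Hg n. specialize (Hg n).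
  assert (H1 := incr_mono f Hf (S (g n)) (g (S n)) Hg). specialize (Hf (g n)). lia.
Qed.
Lemma conv_sub v l g : conv v l -> incr g -> conv (fun n => v (g n)) l.
Proof.
  intros H Hg eps He. destruct (H eps He) as [N HN]. exists N; intros n Hn.
  apply HN. pose proof (incr_ge g Hg n); lia.
Qed.

Lemma BW1 (u : nat -> R) : (forall n, Rabs (u n) <= 1) ->
  exists f, incr f /\ exists l, conv (fun n => u (f n)) l.
Proof.
  intros H. destruct (MC.BW u H) as [f [Hf [l Hl]]]. exists f; split.
  intros n; apply Hf. exists l. intros eps He. destruct (Hl eps He) as [N HN].
  exists N; intros n Hn; apply HN; exact Hn.
Qed.

Definition cconv (c : nat -> Cplx) (mu : Cplx) : Prop :=
  forall eps, 0 < eps -> exists N, forall n, (N <= n)%nat -> N1 (Csub (c n) mu) < eps.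

Lemma cconv_sub c mu g : cconv c mu -> incr g -> cconv (fun n => c (g n)) mu.
Proof.
  intros H Hg eps He. destruct (H eps He) as [N HN]. exists N; intros n Hn.
  apply HN. pose proof (incr_ge g Hg n); lia.
Qed.

Lemma small_zero r C : 0 <= C -> (forall d, 0 < d -> Rabs r <= C * d) -> r = 0.
Proof.
  intros HC H. destruct (Req_dec r 0) as [|Hr]; auto.
  assert (Hp : 0 < Rabs r) by (apply Rabs_pos_lt; auto).
  specialize (H (Rabs r / (2 * (C + 1)))).
  assert (0 < Rabs r / (2 * (C + 1))) by (apply Rdiv_lt_0_compat; lra).
  specialize (H H0).
  assert (C * (Rabs r / (2 * (C + 1))) < Rabs r).
  { unfold Rdiv. replace (C * (Rabs r * / (2 * (C + 1)))) with (Rabs r * (C / (2*(C+1)))) by (field; lra).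
    assert (C / (2 * (C+1)) < 1).
    { apply (Rmult_lt_reg_r (2*(C+1))). lra. unfold Rdiv. rewrite Rmult_assoc, Rinv_l by lra. lra. }
    nra. }
  lra.
Qed.

Lemma cluster (c : nat -> Cplx) : (forall n, cunit (c n)) ->
  exists g, incr g /\ exists mu, cunit mu /\ cconv (fun n => c (g n)) mu.
Proof.
  intros Hc.
  destruct (BW1 (fun n => fst (c n))) as [f1 [Hf1 [l1 Hl1]]].
  { intros n; apply (unit_bound _ (Hc n)). }
  destruct (BW1 (fun n => snd (c (f1 n)))) as [f2 [Hf2 [l2 Hl2]]].
  { intros n; apply (unit_bound _ (Hc _)). }
  exists (fun n => f1 (f2 n)). split. apply incr_comp; auto.
  assert (Hcv : cconv (fun n => c (f1 (f2 n))) (l1, l2)).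
  { intros eps He. pose proof (conv_sub _ _ _ Hl1 Hf2) as H1.
    destruct (H1 (eps/2)) as [N1' HN1]. lra. destruct (Hl2 (eps/2)) as [N2 HN2]. lra.
    exists (max N1' N2); intros n Hn. unfold N1, Csub; simpl.
    specialize (HN1 n ltac:(lia)); specialize (HN2 n ltac:(lia)). simpl in *. lra. }
  exists (l1, l2). split; auto.
  unfold cunit; simpl. apply Rminus_diag_uniq.
  apply (small_zero _ (2 * (Rabs l1 + Rabs l2 + 2))).
  { pose proof (Rabs_pos l1); pose proof (Rabs_pos l2); lra. }
  intros d Hd. destruct (Hcv d Hd) as [N HN]. specialize (HN N (le_n _)).
  set (w := c (f1 (f2 N))) in *. pose proof (Hc (f1 (f2 N))) as Hw. fold w in Hw.
  unfold N1, Csub in HN; simpl in HN. unfold cunit in Hw.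
  destruct w as [p q]; simpl in *.
  replace (l1 * l1 + l2 * l2 - 1) with ((l1 - p) * (l1 + p) + (l2 - q) * (l2 + q))
    by (rewrite <- Hw; ring).
  pose proof (unit_bound (p, q) Hw) as [Bp Bq]; simpl in Bp, Bq.
  eapply Rle_trans. apply Rabs_triang. rewrite !Rabs_mult.
  rewrite (Rabs_minus_sym l1), (Rabs_minus_sym l2).
  pose proof (Rabs_triang l1 p); pose proof (Rabs_triang l2 q).
  pose proof (Rabs_pos (l1+p)); pose proof (Rabs_pos (l2+q));
  pose proof (Rabs_pos (p-l1)); pose proof (Rabs_pos (q-l2)).
  nra.
Qed.

Lemma cluster2 (c c' : nat -> Cplx) : (forall n, cunit (c n)) -> (forall n, cunit (c' n)) ->
  exists g, incr g /\ exists mu mu', cunit mu /\ cunit mu' /\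
    cconv (fun n => c (g n)) mu /\ cconv (fun n => c' (g n)) mu'.
Proof.
  intros Hc Hc'. destruct (cluster c Hc) as [g1 [Hg1 [mu [Hmu Hcv]]]].
  destruct (cluster (fun n => c' (g1 n)) (fun n => Hc' _)) as [g2 [Hg2 [mu' [Hmu' Hcv']]]].
  exists (fun n => g1 (g2 n)); split. apply incr_comp; auto.
  exists mu, mu'; repeat split; auto.
  apply (cconv_sub (fun n => c (g1 n))); auto.
Qed.

Lemma dirichlet a m : cunit a -> cunit m -> forall d, 0 < d ->
  exists k, (1 <= k)%nat /\ N1 (Csub (Cpow a k) Defs.C1) < d /\ N1 (Csub (Cpow m k) Defs.C1) < d.
Proof.
  intros Ha Hm d Hd.
  destruct (cluster2 (Cpow a) (Cpow m) (fun n => unit_pow a n Ha) (fun n => unit_pow m n Hm))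
    as [g [Hg [mu [mu' [_ [_ [H1 H2]]]]]]].
  destruct (H1 (d/4)) as [Na HNa]. lra. destruct (H2 (d/4)) as [Nm HNm]. lra.
  set (N := max Na Nm).
  pose proof (Hg N) as HgN.
  exists (g (S N) - g N)%nat. split. lia.
  assert (Key : forall b mu, cunit b -> N1 (Csub (Cpow b (g N)) mu) < d/4 ->
     N1 (Csub (Cpow b (g (S N))) mu) < d/4 -> N1 (Csub (Cpow b (g (S N) - g N)) Defs.C1) < d).
  { clear H1 H2 HNa HNm. intros b mu0 Hb E1 E2.
    rewrite (conj_trick (Cpow b (g N))) by (apply unit_pow; auto).
    rewrite <- Cpow_add. replace (g N + (g (S N) - g N))%nat with (g (S N)) by lia.
    eapply Rle_lt_trans. apply N1_mul. rewrite N1_conj.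
    pose proof (N1_unit _ (unit_pow b (g N) Hb)).
    pose proof (N1_tri (Cpow b (g (S N))) mu0 (Cpow b (g N))).
    rewrite (N1_sym mu0) in H0.
    pose proof (N1_ge0 (Cpow b (g N))). pose proof (N1_ge0 (Csub (Cpow b (g (S N))) (Cpow b (g N)))).
    nra. }
  split.
  - clear HNm. apply (Key a mu); auto.
    + apply (HNa N). lia.
    + apply (HNa (S N)). lia.
  - apply (Key m mu'); auto.
    + apply (HNm N). lia.
    + apply (HNm (S N)). lia.
Qed.


Section VS.
Variable X : CBanach.
Definition dist (u v : X) : R := vnorm (vadd u (vopp v)).

Lemma add0l (x : X) : vadd vzero x = x.
Proof. rewrite vadd_comm; apply vadd_zero. Qed.
Lemma oppl (x : X) : vadd (vopp x) x = vzero.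
Proof. rewrite vadd_comm; apply vadd_opp. Qed.
Lemma opp_uniq (x y : X) : vadd x y = vzero -> y = vopp x.
Proof.
  intros H. rewrite <- (vadd_zero X y), <- (vadd_opp X x), vadd_assoc,
    (vadd_comm X y x), H; apply add0l.
Qed.
Lemma sub_from (p q r : X) : vadd p q = r -> p = vadd r (vopp q).
Proof. intros H; subst r. rewrite <- vadd_assoc, vadd_opp, vadd_zero; auto. Qed.
Lemma idem0 (z : X) : vadd z z = z -> z = vzero.
Proof. intros H. apply sub_from in H. rewrite vadd_opp in H; auto. Qed.
Lemma split_sub (u v w : X) :
  vadd u (vopp v) = vadd (vadd u (vopp w)) (vadd w (vopp v)).
Proof. rewrite <- vadd_assoc, (vadd_assoc X (vopp w)), oppl, add0l; auto. Qed.

Lemma additive_sub (f : X -> X) : (forall x y, f (vadd x y) = vadd (f x) (f y)) ->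
  forall u v, f (vadd u (vopp v)) = vadd (f u) (vopp (f v)).
Proof.
  intros Hf u v.
  assert (H0 : f vzero = vzero).
  { apply idem0. rewrite <- Hf, vadd_zero; auto. }
  assert (Hn : f (vopp v) = vopp (f v)).
  { apply opp_uniq. rewrite <- Hf, vadd_opp; auto. }
  rewrite Hf, Hn; auto.
Qed.

Lemma Cmod_C0 : Cmod C0 = 0.
Proof. unfold Cmod, C0; simpl. rewrite Rmult_0_l, Rplus_0_l. apply sqrt_0. Qed.
Lemma vscal_C0 (x : X) : vscal C0 x = vzero.
Proof.
  apply idem0. rewrite <- vscal_adds. f_equal. apply Ceq; simpl; ring.
Qed.
Lemma vnorm0 : vnorm (@vzero X) = 0.
Proof.
  rewrite <- (vscal_C0 vzero) at 1. rewrite vnorm_scal, Cmod_C0; ring.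
Qed.
Lemma vopp_scal (x : X) : vopp x = vscal (-1, 0) x.
Proof.
  symmetry. apply opp_uniq. rewrite <- (vscal_one X x) at 1.
  rewrite <- vscal_adds. rewrite <- (vscal_C0 x). f_equal. apply Ceq; simpl; ring.
Qed.
Lemma Cmod_m1 : Cmod (-1, 0) = 1.
Proof. unfold Cmod; simpl. replace (-1 * -1 + 0 * 0) with 1 by ring. apply sqrt_1. Qed.
Lemma vnorm_opp (x : X) : vnorm (vopp x) = vnorm x.
Proof. rewrite vopp_scal, vnorm_scal, Cmod_m1; ring. Qed.
Lemma vnorm_ge0 (x : X) : 0 <= vnorm x.
Proof.
  pose proof (vnorm_triangle X x (vopp x)). rewrite vadd_opp, vnorm0, vnorm_opp in H. lra.
Qed.
Lemma dist_ge0 u v : 0 <= dist u v.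
Proof. apply vnorm_ge0. Qed.
Lemma dist_tri u v w : dist u w <= dist u v + dist v w.
Proof. unfold dist. rewrite (split_sub u w v). apply vnorm_triangle. Qed.
Lemma dist_sym u v : dist u v = dist v u.
Proof.
  unfold dist. rewrite (opp_uniq (vadd v (vopp u)) (vadd u (vopp v))).
  apply vnorm_opp. rewrite <- split_sub. apply vadd_opp.
Qed.
Lemma dist_scal c u v : dist (vscal c u) (vscal c v) = Cmod c * dist u v.
Proof.
  unfold dist. rewrite <- (additive_sub (vscal c)). apply vnorm_scal.
  intros; apply vscal_addv.
Qed.
Lemma dist_scal2 a b x : dist (vscal a x) (vscal b x) = Cmod (Csub a b) * vnorm x.
Proof.
  unfold dist. rewrite <- (sub_from (vscal (Csub a b) x) (vscal b x) (vscal a x)).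
  apply vnorm_scal. rewrite <- vscal_adds. f_equal. destruct a, b; apply Ceq; simpl; ring.
Qed.
Lemma dist_scal2' a b x : dist (vscal a x) (vscal b x) <= N1 (Csub a b) * vnorm x.
Proof.
  rewrite dist_scal2. apply Rmult_le_compat_r. apply vnorm_ge0. apply Cmod_N1.
Qed.
Lemma dist_T (T : X -> X) M : (forall x y, T (vadd x y) = vadd (T x) (T y)) ->
  (forall x, vnorm (T x) <= M * vnorm x) -> forall u v, dist (T u) (T v) <= M * dist u v.
Proof.
  intros Ha Hb u v. unfold dist. rewrite <- (additive_sub T Ha). apply Hb.
Qed.
Lemma dist_self u : dist u u = 0.
Proof. unfold dist. rewrite vadd_opp. apply vnorm0. Qed.
End VS.


Lemma Cmul_1r a : Cmul a Defs.C1 = a.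
Proof. destruct a; apply Ceq; simpl; ring. Qed.
Lemma conj_mul u : cunit u -> Cmul (Cconj u) u = Defs.C1.
Proof. destruct u as [p q]; unfold cunit; simpl; intros H; apply Ceq; simpl; [rewrite <- H|]; ring. Qed.
Lemma unit_conj u : cunit u -> cunit (Cconj u).
Proof. destruct u as [p q]; unfold cunit; simpl; intros H; rewrite <- H; ring. Qed.
Lemma N1_conj_sub u v : N1 (Csub (Cconj u) (Cconj v)) = N1 (Csub u v).
Proof.
  unfold N1, Csub, Cconj; simpl. replace (- snd u - - snd v) with (- (snd u - snd v)) by ring.
  rewrite Rabs_Ropp; auto.
Qed.
Lemma N1_zero : N1 (Csub Defs.C1 Defs.C1) = 0.
Proof. unfold N1, Csub; simpl. replace (1-1) with 0 by ring. replace (0-0) with 0 by ring. rewrite Rabs_R0; ring. Qed.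

Section Main.
Variable X : CBanach.
Variable Gamma : (X -> X) -> Prop.
Hypothesis HB : forall T, Gamma T -> bounded_linear T.
Hypothesis Hmul : forall T S, Gamma T -> Gamma S -> Gamma (fun x => T (S x)).
Variable lam : (X -> X) -> Cplx.
Hypothesis Hlam_T : forall T, Gamma T -> Cmod (lam T) = 1.
Hypothesis Hlam_mul : forall T S, Gamma T -> Gamma S ->
      lam (fun x => T (S x)) = Cmul (lam T) (lam S).
Variable x : X.

Definition P a m := cunit a /\ cunit m /\ forall eps, 0 < eps -> exists T, Gamma T /\
  dist X (T x) (vscal a x) < eps /\ N1 (Csub (lam T) m) < eps.

Lemma lam_unit T : Gamma T -> cunit (lam T).
Proof. intros; apply unit_Cmod; auto. Qed.

Lemma P_mul a m b n : P a m -> P b n -> P (Cmul b a) (Cmul m n).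
Proof.
  intros [Ha [Hm H1]] [Hb [Hn H2]]. split; [apply unit_mul; auto|split; [apply unit_mul; auto|]].
  intros eps He.
  destruct (H1 (eps/4)) as [T [HT [E1 F1]]]. lra.
  destruct (HB T HT) as [Hadd [Hsc [M HM]]].
  set (M' := Rabs M + 1).
  assert (HM'0 : 1 <= M') by (unfold M'; pose proof (Rabs_pos M); lra).
  assert (HM' : forall y, vnorm (T y) <= M' * vnorm y).
  { intros y. eapply Rle_trans. apply HM. apply Rmult_le_compat_r. apply vnorm_ge0.
    unfold M'; pose proof (Rle_abs M); lra. }
  destruct (H2 (eps/(4*M'))) as [S [HS [E2 F2]]].
  { apply Rdiv_lt_0_compat; lra. }
  assert (Hd : eps / (4 * M') <= eps/4).
  { unfold Rdiv. apply Rmult_le_compat_l. lra. apply Rinv_le_contravar; lra. }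
  exists (fun y => T (S y)). split. apply Hmul; auto. split.
  - eapply Rle_lt_trans. apply (dist_tri X _ (T (vscal b x))).
    assert (D1 := dist_T X T M' Hadd HM' (S x) (vscal b x)).
    rewrite Hsc, <- vscal_mul, dist_scal, (Cmod_unit b Hb).
    assert (M' * dist X (S x) (vscal b x) < M' * (eps / (4*M'))) by (apply Rmult_lt_compat_l; lra).
    replace (M' * (eps / (4 * M'))) with (eps/4) in H by (field; lra).
    rewrite Hsc in D1. clearbody M'. lra.
  - rewrite Hlam_mul by auto. rewrite Csub_mul.
    eapply Rle_lt_trans. apply N1_add.
    pose proof (N1_mul (lam T) (Csub (lam S) n)). pose proof (N1_mul (Csub (lam T) m) n).
    pose proof (N1_unit _ (lam_unit T HT)). pose proof (N1_unit _ Hn).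
    pose proof (N1_ge0 (Csub (lam S) n)). pose proof (N1_ge0 (Csub (lam T) m)).
    pose proof (N1_ge0 (lam T)). pose proof (N1_ge0 n).
    nra.
Qed.

Lemma P_pow a m : P a m -> forall k, P (Cpow a (S k)) (Cpow m (S k)).
Proof.
  intros H k. induction k.
  - simpl. rewrite !Cmul_1r; auto.
  - change (Cpow a (S (S k))) with (Cmul a (Cpow a (S k))).
    change (Cpow m (S (S k))) with (Cmul m (Cpow m (S k))).
    rewrite (Cmul_comm m). apply P_mul; auto.
Qed.

Lemma P_one a m : P a m -> P Defs.C1 Defs.C1.
Proof.
  intros H. pose proof H as [Ha [Hm _]].
  split; [apply unit_C1|split; [apply unit_C1|]].
  intros eps He.
  pose proof (vnorm_ge0 X x) as Hx.
  set (d := eps / (2 * (1 + vnorm x))).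
  assert (Hd : 0 < d) by (apply Rdiv_lt_0_compat; lra).
  assert (Hd2 : d * (1 + vnorm x) = eps/2) by (unfold d; field; lra).
  destruct (dirichlet a m Ha Hm d Hd) as [k [Hk [D1 D2]]].
  destruct k as [|k]. lia.
  destruct (P_pow a m H k) as [_ [_ Hp]].
  destruct (Hp d Hd) as [T [HT [E F]]].
  exists T; split; auto. split.
  - eapply Rle_lt_trans. apply (dist_tri X _ (vscal (Cpow a (S k)) x)).
    pose proof (dist_scal2' X (Cpow a (S k)) Defs.C1 x).
    assert (N1 (Csub (Cpow a (S k)) Defs.C1) * vnorm x <= d * vnorm x) by (apply Rmult_le_compat_r; lra).
    nra.
  - eapply Rle_lt_trans. apply (N1_tri _ (Cpow m (S k))). nra.
Qed.

Lemma P_init (Tk : nat -> X -> X) (h : Cplx -> Cplx) :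
  (forall k, Gamma (Tk k)) ->
  (forall u v, N1 (Csub (h u) (h v)) <= N1 (Csub u v)) ->
  (forall u, cunit u -> cunit (h u)) ->
  (forall eps, 0 < eps -> exists N, forall n, (N <= n)%nat ->
      dist X (Tk n x) (vscal (h (lam (Tk n))) x) < eps) ->
  exists a m, P a m.
Proof.
  intros HG Hh Hu Hc.
  destruct (cluster (fun n => lam (Tk n)) (fun n => lam_unit _ (HG n))) as [g [Hg [mu [Hmu Hcv]]]].
  exists (h mu), mu. split; auto. split; auto.
  intros eps He.
  pose proof (vnorm_ge0 X x) as Hx.
  set (d := eps / (2 * (1 + vnorm x))).
  assert (Hd : 0 < d) by (apply Rdiv_lt_0_compat; lra).
  assert (Hd2 : d * (1 + vnorm x) = eps/2) by (unfold d; field; lra).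
  destruct (Hcv d Hd) as [N1' HN1]. destruct (Hc (eps/2)) as [N2 HN2]. lra.
  set (n := max N1' N2).
  specialize (HN1 n ltac:(unfold n; lia)).
  specialize (HN2 (g n) ltac:(pose proof (incr_ge g Hg n); unfold n in *; lia)).
  exists (Tk (g n)). split; auto. split.
  - eapply Rle_lt_trans. apply (dist_tri X _ (vscal (h (lam (Tk (g n)))) x)).
    pose proof (dist_scal2' X (h (lam (Tk (g n)))) (h mu) x).
    pose proof (Hh (lam (Tk (g n))) mu).
    assert (N1 (Csub (h (lam (Tk (g n)))) (h mu)) * vnorm x <= d * vnorm x).
    { apply Rmult_le_compat_r; lra. }
    nra.
  - simpl in HN1. assert (d <= eps/2) by nra. lra.
Qed.

Lemma from_P1 : P Defs.C1 Defs.C1 -> exists Tk : nat -> X -> X, (forall k, Gamma (Tk k)) /\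
  forall eps, 0 < eps -> exists N, forall n, (N <= n)%nat ->
    dist X (Tk n x) x < eps /\ N1 (Csub (lam (Tk n)) Defs.C1) < eps.
Proof.
  intros [_ [_ H]].
  assert (Hk : forall k : nat, exists T, Gamma T /\ dist X (T x) x < / (INR k + 1)
      /\ N1 (Csub (lam T) Defs.C1) < / (INR k + 1)).
  { intros k. destruct (H (/ (INR k + 1))) as [T [HT [E F]]].
    apply Rinv_0_lt_compat. pose proof (pos_INR k); lra.
    exists T. rewrite vscal_one in E. auto. }
  exists (fun k => proj1_sig (constructive_indefinite_description _ (Hk k))). split.
  - intros k. exact (proj1 (proj2_sig (constructive_indefinite_description _ (Hk k)))).
  - intros eps He. destruct (archimed_cor1 eps He) as [N [HN HN0]].
    exists N; intros n Hn.
    pose proof (proj2_sig (constructive_indefinite_description _ (Hk n))) as [HT [E F]].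
    assert (/ (INR n + 1) <= / INR N).
    { apply Rinv_le_contravar. apply lt_0_INR; lia. apply le_INR in Hn. lra. }
    lra.
Qed.
End Main.


Theorem theorem2p7 (X : CBanach) (Gamma : (X -> X) -> Prop)
  (HB : forall T, Gamma T -> bounded_linear T)
  (Hmul : forall T S, Gamma T -> Gamma S -> Gamma (fun x => T (S x)))
  (lam : (X -> X) -> Cplx)
  (Hlam_T : forall T, Gamma T -> Cmod (lam T) = 1)
  (Hlam_mul : forall T S, Gamma T -> Gamma S ->
      lam (fun x => T (S x)) = Cmul (lam T) (lam S)) :
  let Gamma1 : (X -> X) -> Prop :=
    fun U => exists T, Gamma T /\ U = (fun x => vscal (lam T) (T x)) in
  forall x : X, Rec Gamma x <-> Rec Gamma1 x.
Proof.
  intros Gamma1 x.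
  assert (Fin : P X Gamma lam x Defs.C1 Defs.C1 -> x <> vzero -> Rec Gamma x /\ Rec Gamma1 x).
  { intros HP Hx. destruct (from_P1 X Gamma lam x HP) as [Tk [HG Hc]]. split.
    - split; auto. exists Tk; split; auto. intros eps He.
      destruct (Hc eps He) as [N HN]. exists N; intros n Hn. apply (HN n Hn).
    - split; auto. exists (fun k y => vscal (lam (Tk k)) (Tk k y)). split.
      + intros k. exists (Tk k); split; auto.
      + intros eps He. pose proof (vnorm_ge0 X x) as Hxn.
        set (d := eps / (2 * (1 + vnorm x))).
        assert (Hd : 0 < d) by (apply Rdiv_lt_0_compat; lra).
        assert (Hd2 : d * (1 + vnorm x) = eps/2) by (unfold d; field; lra).
        destruct (Hc d Hd) as [N HN]. exists N; intros n Hn.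
        destruct (HN n Hn) as [E F].
        change (dist X (vscal (lam (Tk n)) (Tk n x)) x < eps).
        eapply Rle_lt_trans. apply (dist_tri X _ (vscal (lam (Tk n)) x)).
        rewrite dist_scal, (Cmod_unit _ (lam_unit X Gamma lam Hlam_T _ (HG n))).
        replace (dist X (vscal (lam (Tk n)) x) x) with (dist X (vscal (lam (Tk n)) x) (vscal Defs.C1 x))
          by (rewrite vscal_one; auto).
        pose proof (dist_scal2' X (lam (Tk n)) Defs.C1 x).
        assert (N1 (Csub (lam (Tk n)) Defs.C1) * vnorm x <= d * vnorm x)
          by (apply Rmult_le_compat_r; lra).
        clearbody d. nra. }
  split; intros [Hx [Uk [HU Hc]]]; apply Fin; auto.
  - destruct (P_init X Gamma lam Hlam_T x Uk (fun _ => Defs.C1) HU)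
      as [a [m HP]].
    + intros; rewrite N1_zero; apply N1_ge0.
    + intros; apply unit_C1.
    + intros eps He. destruct (Hc eps He) as [N HN]. exists N; intros n Hn.
      rewrite vscal_one. apply (HN n Hn).
    + apply (P_one X Gamma HB Hmul lam Hlam_T Hlam_mul x a m HP).
  - assert (Hk : forall k, exists T, Gamma T /\ Uk k = (fun y => vscal (lam T) (T y))) by apply HU.
    set (Tk := fun k => proj1_sig (constructive_indefinite_description _ (Hk k))).
    assert (HTk : forall k, Gamma (Tk k) /\ Uk k = (fun y => vscal (lam (Tk k)) (Tk k y))).
    { intros k. exact (proj2_sig (constructive_indefinite_description _ (Hk k))). }
    clearbody Tk.
    destruct (P_init X Gamma lam Hlam_T x Tk Cconj (fun k => proj1 (HTk k)))
      as [a [m HP]].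
    + intros; rewrite N1_conj_sub; apply Rle_refl.
    + apply unit_conj.
    + intros eps He. destruct (Hc eps He) as [N HN]. exists N; intros n Hn.
      destruct (HTk n) as [HG HE].
      pose proof (lam_unit X Gamma lam Hlam_T _ HG) as Hu.
      assert (Ex : Tk n x = vscal (Cconj (lam (Tk n))) (Uk n x)).
      { rewrite HE, vscal_mul, conj_mul, vscal_one; auto. }
      rewrite Ex, dist_scal, (Cmod_unit _ (unit_conj _ Hu)), Rmult_1_l.
      apply (HN n Hn).
    + apply (P_one X Gamma HB Hmul lam Hlam_T Hlam_mul x a m HP).
Qed.
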